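(* Let $n\ge 1$ and consider a bin $B=(l_s,u_s]\times(l_t,u_t]\subseteq[0,n]^2$ with $l_s<u_s$, $l_t<u_t$, containing $o_i\ge 1$ observed rank pairs $(s_{i1},t_{i1}),\dots,(s_{io_i},t_{io_i})\in B$. Let $e_i=(u_s-l_s)(u_t-l_t)/n$ be its expected count. For a vertical split at $c\in(l_s,u_s)$, let $o_{i-}(c)=\#\{k: s_{ik}\le c\}$, $o_{i+}(c)=o_i-o_{i-}(c)$, $e_{i-}(c)=(c-l_s)(u_t-l_t)/n$ and $e_{i+}(c)=(u_s-c)(u_t-l_t)/n$. With the mi score $\mathrm{mi}(o,e)=\frac{o}{n}\log\frac{o}{e}$ (with the convention $0\log 0=0$), define $$\delta_i(c,\mathrm{mi})=\mathrm{mi}\big(o_{i+}(c),e_{i+}(c)\big)+\mathrm{mi}\big(o_{i-}(c),e_{i-}(c)\big)-\mathrm{mi}(o_i,e_i).$$ Then any $c^*\in(l_s,u_s)$ maximizing $\delta_i(c,\mathrm{mi})$ over $c\in(l_s,u_s)$ is one of the point coordinates $s_{i1},\dots,s_{io_i}$. The analogous statement holds for horizontal splits at $c\in(l_t,u_t)$ (with the roles of $s$ and $t$ interchanged), where the maximizer is one of $t_{i1},\dots,t_{io_i}$.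
   Context: Observations $(x_k,y_k)$, $k=1,\dots,n$, are converted to marginal ranks $s_k,t_k\in\{1,\dots,n\}$ (ties broken randomly), so under independence the rank pairs are uniform on the rank space $[0,n]^2$ and the expected number of points in a region of area $a$ is $a/n$. A bin is a rectangle $(l_s,u_s]\times(l_t,u_t]$; splitting it by a vertical line at $c$ produces a lower bin $(l_s,c]\times(l_t,u_t]$ and an upper bin $(c,u_s]\times(l_t,u_t]$ (a point with coordinate equal to $c$ is counted in the lower bin); horizontal splits are defined analogously in the $t$ coordinate. *)

(* Defs.v *)
From Stdlib Require Import Reals List.
Open Scope R_scope.

Definition mi (n : nat) (o : nat) (e : R) : R :=
  if Nat.eqb o 0 then 0 else INR o / INR n * ln (INR o / e).

Definition count_le (xs : list nat) (c : R) : nat :=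
  length (filter (fun x => if Rle_dec (INR x) c then true else false) xs).

(* delta_i(c, mi) for a split at c of the coordinate range (l,u], the other
   side of the bin being (l',u'], and xs the split-direction coordinates of
   the points in the bin. *)
Definition delta (n : nat) (xs : list nat) (l u l' u' c : R) : R :=
  let o := length xs in
  let om := count_le xs c in
  let op := (o - om)%nat in
  mi n op ((u - c) * (u' - l') / INR n)
  + mi n om ((c - l) * (u' - l') / INR n)
  - mi n o ((u - l) * (u' - l') / INR n).

(* Main.v *)
Require Import Defs.
From Stdlib Require Import Reals List Lra Lia Classical.
Open Scope R_scope.

Lemma mi_conv_strict n k W x h : (1 <= n)%nat -> k <> 0%nat -> 0 < W -> 0 < h < x ->
  2 * mi n k (x * W / INR n) < mi n k ((x - h) * W / INR n) + mi n k ((x + h) * W / INR n).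
Proof.
  intros Hn Hk HW Hh. unfold mi.
  destruct (Nat.eqb_neq k 0) as [_ E]. rewrite (E Hk).
  assert (Ha : 0 < INR k) by (apply lt_0_INR; lia).
  assert (HN : 0 < INR n) by (apply lt_0_INR; lia).
  set (a := INR k) in *. set (N := INR n) in *.
  set (C := a * N / W).
  assert (HC : 0 < C) by (unfold C; apply Rdiv_lt_0_compat; nra).
  assert (Eq : forall y, 0 < y -> a / (y * W / N) = C * / y).
  { intros y Hy. unfold C. field. lra. }
  rewrite !Eq by lra.
  assert (P : forall y, 0 < y -> 0 < C * / y).
  { intros y Hy. apply Rmult_lt_0_compat; auto. apply Rinv_0_lt_compat; auto. }
  replace (2 * (a / N * ln (C * / x))) with (a / N * (ln (C * / x) + ln (C * / x))) by ring.
  rewrite <- Rmult_plus_distr_l.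
  apply Rmult_lt_compat_l. apply Rdiv_lt_0_compat; auto.
  rewrite <- !ln_mult by (apply P; lra).
  apply ln_increasing. apply Rmult_lt_0_compat; apply P; lra.
  replace (C * / x * (C * / x)) with (C * C * / (x * x)) by (field; lra).
  replace (C * / (x - h) * (C * / (x + h))) with (C * C * / ((x - h) * (x + h))) by (field; lra).
  apply Rmult_lt_compat_l. nra.
  apply Rinv_lt_contravar. apply Rmult_lt_0_compat; nra. nra.
Qed.

Lemma mi_conv n k W x h : (1 <= n)%nat -> 0 < W -> 0 < h < x ->
  2 * mi n k (x * W / INR n) <= mi n k ((x - h) * W / INR n) + mi n k ((x + h) * W / INR n).
Proof.
  intros. destruct (Nat.eq_dec k 0) as [->|Hk].
  - unfold mi. simpl. lra.
  - left. apply mi_conv_strict; auto.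
Qed.

Lemma sep (xs : list nat) (c : R) : (forall x, In x xs -> INR x <> c) ->
  exists h, 0 < h /\ forall x, In x xs -> h < Rabs (INR x - c).
Proof.
  induction xs as [|y ys IH]; intros H.
  - exists 1. split. lra. intros x [].
  - destruct IH as [h [Hh Hx]]. { intros x Hi. apply H. right; auto. }
    assert (Hy : INR y <> c) by (apply H; left; auto).
    assert (Hp : 0 < Rabs (INR y - c)) by (apply Rabs_pos_lt; lra).
    exists (Rmin h (Rabs (INR y - c)) / 2). split.
    + apply Rmin_case; lra.
    + intros x [E|Hi].
      * subst x. pose proof (Rmin_r h (Rabs (INR y - c))). pose proof (Rmin_case h (Rabs (INR y - c)) (fun z => 0 < z) Hh Hp). simpl in *. lra.
      * pose proof (Rmin_l h (Rabs (INR y - c))). pose proof (Rmin_case h (Rabs (INR y - c)) (fun z => 0 < z) Hh Hp). simpl in *. specialize (Hx x Hi). lra.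
Qed.

Lemma count_same xs c d : (forall x, In x xs -> (INR x <= c <-> INR x <= d)) ->
  count_le xs c = count_le xs d.
Proof.
  unfold count_le. induction xs as [|y ys IH]; intros H; simpl; auto.
  destruct (H y (or_introl eq_refl)) as [H1 H2].
  assert (IH' := IH (fun x Hx => H x (or_intror Hx))).
  destruct (Rle_dec (INR y) c); destruct (Rle_dec (INR y) d); simpl; try rewrite IH'; auto; exfalso; tauto.
Qed.

Lemma count_le_len xs c : (count_le xs c <= length xs)%nat.
Proof. unfold count_le. induction xs; simpl; auto. destruct (Rle_dec _ _); simpl; lia. Qed.

Lemma main n xs l u l' u' cstar : (1 <= n)%nat -> l < u -> l' < u' -> (1 <= length xs)%nat ->
  l < cstar < u ->
  (forall c, l < c < u -> delta n xs l u l' u' c <= delta n xs l u l' u' cstar) ->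
  exists x, In x xs /\ cstar = INR x.
Proof.
  intros Hn Hlu Hl' Hlen Hc Hmax.
  destruct (classic (exists x, In x xs /\ cstar = INR x)) as [?|Hno]; auto. exfalso.
  destruct (sep xs cstar) as [h0 [Hh0 Hs]].
  { intros x Hi E. apply Hno. exists x; auto. }
  set (h := Rmin h0 (Rmin (cstar - l) (u - cstar)) / 2).
  assert (Hh : 0 < h /\ h < h0 /\ h < cstar - l /\ h < u - cstar).
  { unfold h. pose proof (Rmin_l h0 (Rmin (cstar - l) (u - cstar))).
    pose proof (Rmin_r h0 (Rmin (cstar - l) (u - cstar))).
    pose proof (Rmin_l (cstar - l) (u - cstar)). pose proof (Rmin_r (cstar - l) (u - cstar)).
    assert (0 < Rmin h0 (Rmin (cstar - l) (u - cstar))).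
    { apply Rmin_case; auto. apply Rmin_case; lra. }
    lra. }
  assert (E1 : count_le xs (cstar - h) = count_le xs cstar).
  { apply count_same. intros x Hi. specialize (Hs x Hi). unfold Rabs in Hs.
    destruct (Rcase_abs (INR x - cstar)); split; lra. }
  assert (E2 : count_le xs (cstar + h) = count_le xs cstar).
  { apply count_same. intros x Hi. specialize (Hs x Hi). unfold Rabs in Hs.
    destruct (Rcase_abs (INR x - cstar)); split; lra. }
  pose proof (Hmax (cstar - h) ltac:(lra)) as M1.
  pose proof (Hmax (cstar + h) ltac:(lra)) as M2.
  unfold delta in M1, M2. rewrite E1 in M1. rewrite E2 in M2. unfold delta in M1, M2.
  set (m := count_le xs cstar) in *. set (o := length xs) in *.
  assert (Hm : (m <= o)%nat) by apply count_le_len.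
  set (W := u' - l') in *.
  assert (HW : 0 < W) by (unfold W; lra).
  replace (u - (cstar - h)) with ((u - cstar) + h) in M1 by ring.
  replace (u - (cstar + h)) with ((u - cstar) - h) in M2 by ring.
  replace (cstar - h - l) with ((cstar - l) - h) in M1 by ring.
  replace (cstar + h - l) with ((cstar - l) + h) in M2 by ring.
  destruct (Nat.eq_dec m 0) as [Hm0|Hm0].
  - pose proof (mi_conv_strict n (o - m) W (u - cstar) h Hn ltac:(lia) HW ltac:(lra)).
    pose proof (mi_conv n m W (cstar - l) h Hn HW ltac:(lra)). lra.
  - pose proof (mi_conv n (o - m) W (u - cstar) h Hn HW ltac:(lra)).
    pose proof (mi_conv_strict n m W (cstar - l) h Hn Hm0 HW ltac:(lra)). lra.
Qed.
Theorem proposition2 :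
  forall (n : nat) (ls us lt ut : R) (pts : list (nat * nat)),
    (1 <= n)%nat ->
    0 <= ls -> ls < us -> us <= INR n ->
    0 <= lt -> lt < ut -> ut <= INR n ->
    (1 <= length pts)%nat ->
    (forall p, In p pts ->
       (1 <= fst p <= n)%nat /\ (1 <= snd p <= n)%nat /\
       ls < INR (fst p) <= us /\ lt < INR (snd p) <= ut) ->
    (* vertical splits *)
    (forall cstar, ls < cstar < us ->
       (forall c, ls < c < us ->
          delta n (map fst pts) ls us lt ut c
          <= delta n (map fst pts) ls us lt ut cstar) ->
       exists p, In p pts /\ cstar = INR (fst p))
    /\
    (* horizontal splits *)
    (forall cstar, lt < cstar < ut ->
       (forall c, lt < c < ut ->
          delta n (map snd pts) lt ut ls us c
          <= delta n (map snd pts) lt ut ls us cstar) ->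
       exists p, In p pts /\ cstar = INR (snd p)).
Proof.
  intros n ls us lt ut pts Hn H0 H1 H2 H3 H4 H5 Hlen Hpts. split.
  - intros cstar Hc Hmax.
    destruct (main n (map fst pts) ls us lt ut cstar Hn H1 H4 ltac:(rewrite length_map; auto) Hc Hmax)
      as [x [Hi E]].
    apply in_map_iff in Hi. destruct Hi as [p [Ep Hp]]. exists p. subst. auto.
  - intros cstar Hc Hmax.
    destruct (main n (map snd pts) lt ut ls us cstar Hn H4 H1 ltac:(rewrite length_map; auto) Hc Hmax)
      as [x [Hi E]].
    apply in_map_iff in Hi. destruct Hi as [p [Ep Hp]]. exists p. subst. auto.
Qed.
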